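(* Consider the scheduler $\texttt{UNK}$ described in the context, run on a task arrival process $\mathcal{T}$ such that, at every time from time $0$ until $\texttt{UNK}$ completes its final task, $\texttt{UNK}$ has at least one alive task. Then the total measure of times in this period at which $\texttt{UNK}$ is unsaturated is at most half the length of the period (i.e., at most half of $\texttt{UNK}$'s awake time).
   Context: Serial-parallel scheduling problem: $p$ identical processors; a task arrival process is a finite set of tasks $\tau_i=(\sigma_i,\pi_i,t_i)$ with arrival time $t_i\ge 0$, serial work $\sigma_i$, parallel work $\pi_i$, $1\le\pi_i/\sigma_i\le p$. A task runs either as a serial job (work $\sigma_i$, at most one processor at a time) or as a parallel job (work $\pi_i$, any number of processors, rate equal to number of processors); the choice is irrevocable once the task is started; time is continuous and preemption is allowed. A task is alive from arrival until completion; awake time is the measure of times with an alive task. The scheduler $\texttt{UNK}$: whenever there are idle processors, $\texttt{UNK}$ takes any arrived but not-yet-started task $\tau_i$ and, if $\tau_i$ arrived more than $\sigma_i$ time ago, starts its serial job; otherwise it starts its parallel job. At each time $\texttt{UNK}$ allocates one processor to each of the (at most $p$) running serial jobs; at most one parallel job runs at a time, and it receives all processors not used by serial jobs. $\texttt{UNK}$ is saturated at a time if all $p$ processors are in use, and unsaturated otherwise. *)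

(* Defs.v *)
From HB Require Import structures.
From mathcomp Require Import all_boot all_order all_algebra.
From mathcomp Require Import all_classical all_reals all_analysis.
Set Implicit Arguments. Unset Strict Implicit. Unset Printing Implicit Defensive.
Import Order.TTheory GRing.Theory Num.Theory.
Local Open Scope classical_set_scope.
Local Open Scope ring_scope.

(* A task arrival process with n tasks on p processors:
   task i has arrival time arr i, serial work sig i, parallel work pw i. *)
Definition task_process (R : realType) (p n : nat)
  (arr sig pw : 'I_n -> R) : Prop :=
  forall i, 0 <= arr i /\ 0 < sig i /\ sig i <= pw i /\ pw i <= p%:R * sig i.

Section Exec.
Variables (R : realType) (p n : nat).
(* An execution: start time st i, mode ser i (true = serial job,
   false = parallel job), completion time comp i. *)
Variables (st comp : 'I_n -> R) (ser : 'I_n -> bool).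

Definition running (i : 'I_n) (t : R) : bool := (st i <= t) && (t < comp i).

Definition nser (t : R) : nat := #|[set i | ser i && running i t]|.

Definition par_running (t : R) : bool := [exists i, ~~ ser i && running i t].

(* number of processors in use at time t: one per serial job, and the
   running parallel job (if any) gets all remaining processors *)
Definition busy (t : R) : nat := if par_running t then p else nser t.

Definition saturated (t : R) : Prop := busy t = p.
End Exec.

Definition UNK_run (R : realType) (p n : nat) (arr sig pw : 'I_n -> R)
  (st comp : 'I_n -> R) (ser : 'I_n -> bool) : Prop :=
      (forall i, arr i <= st i /\ ser i = (st i - arr i > sig i)) /\
      (* serial jobs run on one processor from start to completion *)
      (forall i, ser i -> comp i = st i + sig i) /\
      (forall t, (nser st comp ser t <= p)%N) /\
      (forall i j t, ~~ ser i -> ~~ ser j -> running st comp i t ->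
        running st comp j t -> i = j) /\
      (* a parallel job starts only when processors are idle, receives all
         processors not used by serial jobs, and completes exactly when its
         parallel work is done *)
      (forall i, ~~ ser i ->
        [/\ st i < comp i, (nser st comp ser (st i) < p)%N &
            (\int[lebesgue_measure]_(t in `[st i, comp i[)
               ((p%:R - (nser st comp ser t)%:R : R)%:E) = (pw i)%:E)%E]) /\
      (forall i j, ~~ ser i -> ser j -> ~ (st i < st j < comp i)) /\
      (forall t, (exists i, arr i <= t < st i) -> saturated p st comp ser t).

Definition makespan (R : realType) (n : nat) (comp : 'I_n -> R) : R :=
  \big[Num.max/0]_(i < n) comp i.

(* Main.v *)
Require Import Defs.
From HB Require Import structures.
From mathcomp Require Import all_boot all_order all_algebra.
From mathcomp Require Import all_classical all_reals all_analysis.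
From mathcomp Require Import lra.
Import Order.TTheory GRing.Theory Num.Theory.
Local Open Scope classical_set_scope.
Local Open Scope ring_scope.

Lemma leb_mono (R : realType) (A B : set R) : A `<=` B ->
  (lebesgue_measure A <= lebesgue_measure B)%E.
Proof. move=> AB. exact: (le_outer_measure (mu_ext (wlength (@idfun R)))). Qed.

Lemma leb_U2 (R : realType) (A B : set R) :
  (lebesgue_measure (A `|` B) <= lebesgue_measure A + lebesgue_measure B)%E.
Proof. exact: (outer_measureU2 (mu_ext (wlength (@idfun R)))). Qed.

Arguments leb_mono {R A B}.
Arguments leb_U2 {R}.

Theorem lemma5p2 (R : realType) (p n : nat) (arr sig pw : 'I_n -> R)
  (st comp : 'I_n -> R) (ser : 'I_n -> bool) :
  (0 < p)%N ->
  task_process p arr sig pw ->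
  UNK_run p arr sig pw st comp ser ->
  (forall t, 0 <= t < makespan comp -> exists i, arr i <= t < comp i) ->
  (lebesgue_measure ([set t : R | (0 <= t <= makespan comp)%R] `&`
                     [set t | ~ saturated p st comp ser t])
    <= (makespan comp / 2)%:E)%E.
Proof.
move=> p0 tp [Hst [Hcomp [_ [_ [_ [_ Hgreedy]]]]]] Halive.
set M := makespan comp.
set U := [set t | ~ saturated p st comp ser t].
have keyU : forall t, 0 <= t < M -> U t ->
    exists j, ser j && (st j <= t < comp j).
  move=> t tM Ut; have [j /andP[aj tj]] := Halive t tM.
  have sjt : st j <= t.
    rewrite leNgt; apply/negP => ts; apply: Ut; apply: Hgreedy.
    by exists j; rewrite aj ts.
  exists j; case sj: (ser j); first by rewrite /= sjt tj.
  exfalso; apply: Ut; rewrite /saturated /busy.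
  have -> : par_running st comp ser t.
    by apply/existsP; exists j; rewrite sj /running sjt tj.
  by [].
pose V (x : R) : set R := `[0, x[ `&` U.
have step : forall x, 0 <= x <= M ->
    (lebesgue_measure (V x) <= (x / 2)%:E)%E \/
    exists i, arr i < x /\
      ((lebesgue_measure (V (arr i)) <= (arr i / 2)%:E)%E ->
       (lebesgue_measure (V x) <= (x / 2)%:E)%E).
  move=> x /andP[x0 xM].
  case: (pickP (fun i => ser i && (st i < x))) => [i0 Pi0|Tn]; last first.
    left; have -> : V x = set0.
      apply/seteqP; split => // t [/= tx Ut].
      rewrite in_itv /= in tx; case/andP: tx => t0 tx.
      have [|j /andP[sj /andP[sjt tcj]]] := keyU t _ Ut.
        by rewrite t0 (lt_le_trans tx xM).
      by have := Tn j; rewrite sj (le_lt_trans sjt tx).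
    by rewrite measure0 lee_fin divr_ge0.
  right.
  case: (@arg_maxP _ _ _ i0 (fun i => ser i && (st i < x)) comp Pi0)
    => im /andP[sim stim] maxi.
  have [aim sereq] := Hst im.
  have hsig : sig im < st im - arr im by rewrite -sereq.
  have hcomp := Hcomp im sim.
  exists im; split; first by apply: le_lt_trans stim.
  move=> IHa.
  set c := Order.min (comp im) x.
  have sig0 : 0 < sig im by have [_ [s0 _]] := tp im.
  have stc : st im < c by rewrite lt_min stim hcomp ltrDl sig0.
  have sub : V x `<=` V (arr im) `|` `[st im, c[.
    move=> t [/= tx Ut]; rewrite in_itv /= in tx; case/andP: tx => t0 tx.
    case: (ltP t (arr im)) => ta.
      by left; split => //=; rewrite in_itv /= t0 ta.
    right; rewrite /= in_itv /=.
    have sit : st im <= t.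
      rewrite leNgt; apply/negP => ts; apply: Ut; apply: Hgreedy.
      by exists im; rewrite ta ts.
    have [|j /andP[sj /andP[sjt tcj]]] := keyU t _ Ut.
      by rewrite t0 (lt_le_trans tx xM).
    have := maxi j; rewrite sj (le_lt_trans sjt tx) => /(_ isT) cji.
    by rewrite sit lt_min tx (lt_le_trans tcj cji).
  apply: (le_trans (leb_mono sub)); apply: (le_trans (leb_U2 _ _)).
  rewrite lebesgue_measure_itv /= lte_fin stc.
  apply: (le_trans (leeD IHa (lexx _))).
  rewrite -EFinD lee_fin.
  have cx : c <= x by rewrite ge_min lexx orbT.
  have cc : c <= comp im by rewrite ge_min lexx.
  rewrite hcomp in cc.
  lra.
have claim : forall k x, 0 <= x <= M ->
    (#|[set i : 'I_n | (arr i < x)%R]%SET| <= k)%N ->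
    (lebesgue_measure (V x) <= (x / 2)%:E)%E.
  elim=> [|k IH] x xb card; case: (step x xb) => // -[i [aix imp]].
    move: card; rewrite leqn0 => /eqP/cards0_eq/setP/(_ i).
    by rewrite !inE aix.
  apply: imp; apply: IH.
    have [a0 _] := tp i.
    by rewrite a0 ltW // (lt_le_trans aix); case/andP: xb.
  have P : ([set j : 'I_n | (arr j < arr i)%R] \proper [set j : 'I_n | (arr j < x)%R])%SET.
    apply/properP; split.
      by apply/fintype.subsetP => j; rewrite !inE => h; exact: lt_trans h aix.
    by exists i; rewrite !inE ?aix ?ltxx.
  by rewrite -ltnS (leq_trans (proper_card P) card).
have M0 : 0 <= M.
  by rewrite /M /makespan; elim/big_rec: _ => // j y _ hy; rewrite le_max hy orbT.
have sub : [set t | 0 <= t <= M] `&` U `<=` V M `|` [set M].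
  move=> t [/= /andP[t0 tM] Ut]; case: (ltP t M) => h.
    by left; split => //=; rewrite in_itv /= t0 h.
  by right; apply/eqP; rewrite eq_le tM h.
apply: (le_trans (leb_mono sub)); apply: (le_trans (leb_U2 _ _)).
rewrite lebesgue_measure_set1 adde0.
apply: (claim n); first by rewrite M0 lexx.
rewrite -[X in (_ <= X)%N]card_ord; exact: max_card.
Qed.
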